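(* Let $L\ge0$ and $R\ge1$ be integers and let $V$ be the space of $R$-tuples $f=(f[1],\ldots,f[R])$ of functions on the sphere $S^2$ of the form $f[r](\theta,\varphi)=\sum_{\ell=0}^L\sum_{m=-\ell}^\ell A_\ell^m[r]\,Y_\ell^m(\theta,\varphi)$ with $A_\ell^m[r]\in\mathbb C$, on which $SO(3)$ acts shell-wise by $(g\cdot f)[r](x)=f[r](g^{-1}x)$. Let $T$ be the tomographic (slice) operator $T h(\varphi)=h(\pi/2,\varphi)$ restricting a function on $S^2$ to the equator. Define the unprojected second moment of $f$ as the collection of functions $$m^2_f[r_1,r_2](\theta_1,\varphi_1,\theta_2,\varphi_2)=\int_{SO(3)}(g\cdot f)[r_1](\theta_1,\varphi_1)\,\overline{(g\cdot f)[r_2](\theta_2,\varphi_2)}\,dg,\quad r_1,r_2\in\{1,\ldots,R\},$$ and the projected (cryo-EM) second moment as $$\int_{SO(3)}T\big((g\cdot f)[r_1]\big)(\varphi_1)\,\overline{T\big((g\cdot f)[r_2]\big)(\varphi_2)}\,dg,\quad r_1,r_2\in\{1,\ldots,R\}.$$ Then the projected second moment of $f$ determines the unprojected second moment of $f$ and conversely; in particular, for $f,f'\in V$ the projected second moments coincide if and only if the unprojected second moments coincide.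
   Context: $Y_\ell^m$ ($-\ell\le m\le\ell$) are the spherical harmonics of degree $\ell$, forming an orthonormal basis of the $(2\ell+1)$-dimensional irreducible representation of $SO(3)$; $(\theta,\varphi)$ are spherical coordinates; $dg$ is the normalized Haar measure on $SO(3)$. In cryo-EM, $f$ models a radially discretized (with $R$ shells), bandlimited (bandlimit $L$) Fourier transform of a 3-D structure, and by the Fourier slice theorem the tomographic projection corresponds to restriction to a central plane, here the equator $\theta=\pi/2$. *)

(* Defs.v *)
From Stdlib Require Import Reals ZArith.
From Coquelicot Require Export Coquelicot.
Open Scope R_scope.

Fixpoint csum (F : nat -> C) (n : nat) : C :=
  match n with O => RtoC 0 | S k => Cplus (csum F k) (F k) end.

Definition vec3 := (R * R * R)%type.
Definition mat3 := nat -> nat -> R.   (* entries g i j, i,j in {0,1,2} *)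

Definition vcoord (x : vec3) (i : nat) : R :=
  match x with (a, b, c) => match i with 0%nat => a | 1%nat => b | _ => c end end.

Definition mat_mul (g h : mat3) : mat3 :=
  fun i j => g i 0%nat * h 0%nat j + g i 1%nat * h 1%nat j + g i 2%nat * h 2%nat j.

Definition mat_vec (g : mat3) (x : vec3) : vec3 :=
  (g 0%nat 0%nat * vcoord x 0 + g 0%nat 1%nat * vcoord x 1 + g 0%nat 2%nat * vcoord x 2,
   g 1%nat 0%nat * vcoord x 0 + g 1%nat 1%nat * vcoord x 1 + g 1%nat 2%nat * vcoord x 2,
   g 2%nat 0%nat * vcoord x 0 + g 2%nat 1%nat * vcoord x 1 + g 2%nat 2%nat * vcoord x 2).

Definition transpose (g : mat3) : mat3 := fun i j => g j i.

(* For g in SO(3), g^{-1} = g^T. *)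
Definition rot_inv_apply (g : mat3) (x : vec3) : vec3 := mat_vec (transpose g) x.

Definition Rz (a : R) : mat3 := fun i j =>
  match i, j with
  | 0%nat, 0%nat => cos a | 0%nat, 1%nat => - sin a
  | 1%nat, 0%nat => sin a | 1%nat, 1%nat => cos a
  | 2%nat, 2%nat => 1 | _, _ => 0 end.
Definition Ry (b : R) : mat3 := fun i j =>
  match i, j with
  | 0%nat, 0%nat => cos b | 0%nat, 2%nat => sin b
  | 2%nat, 0%nat => - sin b | 2%nat, 2%nat => cos b
  | 1%nat, 1%nat => 1 | _, _ => 0 end.

Definition euler (a b c : R) : mat3 := mat_mul (Rz a) (mat_mul (Ry b) (Rz c)).

(* Integral of F : SO(3) -> C against the normalized Haar measure dg,
   written in ZYZ Euler angles: dg = sin b da db dc / (8 pi^2). *)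
Definition haar_int (F : mat3 -> C) : C :=
  Cmult (RtoC (/ (8 * PI ^ 2)))
    (RInt (V := C_R_CompleteNormedModule) (fun a =>
       RInt (V := C_R_CompleteNormedModule) (fun b =>
         RInt (V := C_R_CompleteNormedModule) (fun c => Cmult (RtoC (sin b)) (F (euler a b c))) 0 (2 * PI)) 0 PI) 0 (2 * PI)).

Definition sph (theta phi : R) : vec3 :=
  (sin theta * cos phi, sin theta * sin phi, cos theta).

(* Legendre polynomial via Rodrigues: P_l(x) = 1/(2^l l!) d^l/dx^l (x^2-1)^l;
   dLeg l k x = d^k/dx^k P_l (x). *)
Definition dLeg (l k : nat) (x : R) : R :=
  / (2 ^ l * INR (fact l)) * Derive_n (fun t => (t ^ 2 - 1) ^ l) (l + k) x.

Definition Ynorm (l k : nat) : R :=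
  sqrt ((2 * INR l + 1) / (4 * PI) * INR (fact (l - k)) / INR (fact (l + k))).

(* For m = k >= 0:  Y_l^k(theta,phi) = N_lk P_l^k(cos theta) e^{i k phi} with
   P_l^k(x) = (-1)^k (1-x^2)^{k/2} d^k/dx^k P_l(x) (Condon-Shortley phase).
   On the unit sphere, (1-cos^2 theta)^{k/2} e^{ik phi} = (x + i y)^k, so as a
   function of the point (x,y,z) in S^2: *)
Definition Ypos (l k : nat) (p : vec3) : C :=
  Cmult (RtoC (Ynorm l k * (-1) ^ k * dLeg l k (vcoord p 2)))
        (Cpow (vcoord p 0, vcoord p 1) k).

Definition Ylm (l : nat) (m : Z) (p : vec3) : C :=
  if (0 <=? m)%Z then Ypos l (Z.to_nat m) p
  else Cmult (RtoC ((-1) ^ Z.abs_nat m)) (Cconj (Ypos l (Z.abs_nat m) p)).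

(* An element f of V is given by its coefficients A r l m (shell r, degree l, order m):
   f[r](p) = sum_{l=0}^{L} sum_{m=-l}^{l} A r l m Y_l^m(p). *)
Definition coeffs := nat -> nat -> Z -> C.

Definition shell (L : nat) (A : coeffs) (r : nat) (p : vec3) : C :=
  csum (fun l =>
    csum (fun k => let m := (Z.of_nat k - Z.of_nat l)%Z in Cmult (A r l m) (Ylm l m p))
         (2 * l + 1)) (L + 1).

Definition act_shell (L : nat) (A : coeffs) (g : mat3) (r : nat) (p : vec3) : C :=
  shell L A r (rot_inv_apply g p).

Definition tomo (h : R -> R -> C) (phi : R) : C := h (PI / 2) phi.

Definition m2 (L : nat) (A : coeffs) (r1 r2 : nat) (th1 ph1 th2 ph2 : R) : C :=
  haar_int (fun g =>
    Cmult (act_shell L A g r1 (sph th1 ph1)) (Cconj (act_shell L A g r2 (sph th2 ph2)))).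

Definition m2proj (L : nat) (A : coeffs) (r1 r2 : nat) (ph1 ph2 : R) : C :=
  haar_int (fun g =>
    Cmult (tomo (fun th ph => act_shell L A g r1 (sph th ph)) ph1)
          (Cconj (tomo (fun th ph => act_shell L A g r2 (sph th ph)) ph2))).

(* Main.v *)
Require Import Defs.
From Stdlib Require Import Reals ZArith Lra Lia List FunctionalExtensionality.
From Coquelicot Require Import Coquelicot.
Open Scope R_scope.

Definition upd (x : nat -> R) (v : nat) (t : R) : nat -> R :=
  fun w => if Nat.eqb w v then t else x w.

Definition mu (e : nat * nat) (t : R) : R := cos t ^ fst e * sin t ^ snd e.

Definition Mono := (R * (nat -> nat * nat))%type.
Definition Poly := list Mono.

Fixpoint prodv (n : nat) (f : nat -> R) : R :=
  match n with O => 1 | S k => prodv k f * f k end.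

Definition NV := 4%nat.
Definition evalM (m : Mono) (x : nat -> R) : R :=
  fst m * prodv NV (fun w => mu (snd m w) (x w)).
Fixpoint evalP (P : Poly) (x : nat -> R) : R :=
  match P with nil => 0 | m :: Q => evalM m x + evalP Q x end.

Lemma prodv_ext n f g : (forall w, (w < n)%nat -> f w = g w) -> prodv n f = prodv n g.
Proof.
  induction n; intros H; simpl; auto.
  rewrite IHn by (intros; apply H; lia). rewrite H by lia. auto.
Qed.

Lemma prodv_split n v f : (v < n)%nat ->
  prodv n f = f v * prodv n (fun w => if Nat.eqb w v then 1 else f w).
Proof.
  induction n; intros Hv; [lia|]. simpl.
  destruct (Nat.eq_dec v n) as [->|Hne].
  - rewrite Nat.eqb_refl.
    rewrite (prodv_ext n (fun w => if Nat.eqb w n then 1 else f w) f).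
    + ring.
    + intros w Hw. destruct (Nat.eqb_spec w n); [lia|auto].
  - rewrite IHn by lia. destruct (Nat.eqb_spec n v); [lia|]. ring.
Qed.

Definition upde (e : nat -> nat * nat) (v : nat) (pe : nat * nat) : nat -> nat * nat :=
  fun w => if Nat.eqb w v then pe else e w.

Definition others (e : nat -> nat * nat) (v : nat) (x : nat -> R) : R :=
  prodv NV (fun w => if Nat.eqb w v then 1 else mu (e w) (x w)).

Lemma evalM_split c e v x pe : (v < NV)%nat ->
  evalM (c, upde e v pe) x = c * others e v x * mu pe (x v).
Proof.
  intros Hv. unfold evalM, others; cbn [fst snd].
  rewrite (prodv_split NV v) by auto. unfold upde at 1. rewrite Nat.eqb_refl.
  rewrite (prodv_ext NV _ (fun w => if Nat.eqb w v then 1 else mu (e w) (x w))).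
  - ring.
  - intros w _. unfold upde. destruct (Nat.eqb w v); auto.
Qed.

Lemma upde_same e v : upde e v (e v) = e.
Proof. apply functional_extensionality; intro w; unfold upde.
  destruct (Nat.eqb_spec w v); subst; auto. Qed.

Lemma evalM_split' m v x : (v < NV)%nat ->
  evalM m x = fst m * others (snd m) v x * mu (snd m v) (x v).
Proof.
  intros Hv. destruct m as [c e]. cbn [fst snd].
  rewrite <- (evalM_split c e v x (e v) Hv). rewrite upde_same. auto.
Qed.

Lemma others_upd e v x t : others e v (upd x v t) = others e v x.
Proof.
  unfold others. apply prodv_ext. intros w _. unfold upd.
  destruct (Nat.eqb w v); auto.
Qed.

Lemma upd_same x v : upd x v (x v) = x.
Proof. apply functional_extensionality; intro w; unfold upd.
  destruct (Nat.eqb_spec w v); subst; auto. Qed.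

Lemma upd_upd x v t s : upd (upd x v t) v s = upd x v s.
Proof. apply functional_extensionality; intro w; unfold upd.
  destruct (Nat.eqb w v); auto. Qed.

Lemma upd_eq x v t : upd x v t v = t.
Proof. unfold upd. rewrite Nat.eqb_refl. auto. Qed.

Lemma upd_neq x v t w : w <> v -> upd x v t w = x w.
Proof. intros H. unfold upd. destruct (Nat.eqb_spec w v); auto. lia. Qed.

Lemma is_derive_mu p q t :
  is_derive (mu (p, q)) t (- INR p * mu (pred p, S q) t + INR q * mu (S p, pred q) t).
Proof.
  unfold mu; cbn [fst snd].
  evar (d : R).
  assert (H : is_derive (fun t => cos t ^ p * sin t ^ q) t d).
  { auto_derive; auto. unfold d; reflexivity. }
  unfold d in H. eapply is_derive_ext; [intro; reflexivity|].
  match goal with H : is_derive _ _ ?D |- is_derive _ _ ?E => replace E with D by (simpl; ring) end.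
  exact H.
Qed.

Definition dM (v : nat) (m : Mono) : Poly :=
  let (c, e) := m in
  let (p, q) := e v in
  (c * - INR p, upde e v (pred p, S q)) :: (c * INR q, upde e v (S p, pred q)) :: nil.
Definition dP (v : nat) (P : Poly) : Poly := flat_map (dM v) P.

Lemma evalP_app P Q x : evalP (P ++ Q) x = evalP P x + evalP Q x.
Proof. induction P; simpl; [ring|]. rewrite IHP. ring. Qed.



Lemma evalM_upd m v x t : (v < NV)%nat ->
  evalM m (upd x v t) = fst m * others (snd m) v x * mu (snd m v) t.
Proof.
  intros Hv. rewrite (evalM_split' m v) by auto. rewrite others_upd, upd_eq. auto.
Qed.

Lemma is_derive_evalP P v x t0 : (v < NV)%nat ->
  is_derive (fun t => evalP P (upd x v t)) t0 (evalP (dP v P) (upd x v t0)).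
Proof.
  intros Hv. induction P as [|m P IH]; simpl.
  - apply (is_derive_const 0).
  - rewrite evalP_app. apply (is_derive_plus (fun t => evalM m (upd x v t))); [|exact IH].
    destruct m as [c e]. unfold dM. destruct (e v) as [p q] eqn:Ev. simpl evalP.
    rewrite !evalM_split by auto. rewrite !others_upd, !upd_eq.
    apply (is_derive_ext (fun t => c * others e v x * mu (p, q) t)).
    { intro t. rewrite evalM_upd by auto. cbn [fst snd]. rewrite Ev. reflexivity. }
    evar (d : R).
    assert (H : is_derive (fun t => c * others e v x * mu (p, q) t) t0 d).
    { apply is_derive_scal. apply is_derive_mu. }
    unfold d in H. replace (c * - INR p * others e v x * mu (Init.Nat.pred p, S q) t0 +
     (c * INR q * others e v x * mu (S p, Init.Nat.pred q) t0 + 0)) with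
     (c * others e v x * (- INR p * mu (Init.Nat.pred p, S q) t0 + INR q * mu (S p, Init.Nat.pred q) t0)) by ring.
    exact H.
Qed.

Lemma mu00 t : mu (0,0)%nat t = 1.
Proof. unfold mu. simpl. ring. Qed.

Lemma continuous_mu e t : continuous (mu e) t.
Proof. destruct e as [p q]. apply (ex_derive_continuous (mu (p,q))). eexists. apply is_derive_mu. Qed.

Lemma ex_RInt_mu e lo hi : ex_RInt (mu e) lo hi.
Proof. apply (ex_RInt_continuous (V:=R_CompleteNormedModule)). intros. apply continuous_mu. Qed.

Lemma is_RInt_0 lo hi : is_RInt (fun _ : R => 0) lo hi 0.
Proof. pose proof (is_RInt_const (V:=R_NormedModule) lo hi 0) as H.
  unfold scal in H; simpl in H; unfold mult in H; simpl in H. rewrite Rmult_0_r in H. exact H. Qed.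

Lemma is_RInt_scalR (f : R -> R) lo hi l k : is_RInt f lo hi l -> is_RInt (fun t => k * f t) lo hi (k * l).
Proof. intros H. apply (is_RInt_scal (V:=R_NormedModule) f lo hi k l H). Qed.

Definition intM (v : nat) (lo hi : R) (m : Mono) : Mono :=
  let (c, e) := m in (c * RInt (mu (e v)) lo hi, upde e v (0,0)%nat).
Definition intP v lo hi (P : Poly) : Poly := map (intM v lo hi) P.

Lemma is_RInt_evalP P v x lo hi : (v < NV)%nat ->
  is_RInt (fun t => evalP P (upd x v t)) lo hi (evalP (intP v lo hi P) x).
Proof.
  intros Hv. induction P as [|m P IH]; simpl.
  - apply is_RInt_0.
  - apply (is_RInt_plus (fun t => evalM m (upd x v t))); [|exact IH].
    destruct m as [c e]. unfold intM. rewrite evalM_split by auto. rewrite mu00.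
    apply (is_RInt_ext (fun t => c * others e v x * mu (e v) t)).
    { intros t _. rewrite evalM_upd by auto. reflexivity. }
    cbn [fst snd].
    replace (c * RInt (mu (e v)) lo hi * others e v x * 1) with
      ((c * others e v x) * (RInt (mu (e v)) lo hi)) by ring.
    apply is_RInt_scalR. apply (RInt_correct (V:=R_CompleteNormedModule)). apply ex_RInt_mu.
Qed.

Definition mulM (m1 m2 : Mono) : Mono :=
  (fst m1 * fst m2, fun w => (fst (snd m1 w) + fst (snd m2 w), snd (snd m1 w) + snd (snd m2 w))%nat).
Definition mulP (P Q : Poly) : Poly := flat_map (fun m => map (mulM m) Q) P.
Definition scalP (r : R) (P : Poly) : Poly := map (fun m => (r * fst m, snd m)) P.
Definition e0 : nat -> nat * nat := fun _ => (0,0)%nat.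
Definition constP (r : R) : Poly := (r, e0) :: nil.
Definition cosP (v : nat) : Poly := (1, upde e0 v (1,0)%nat) :: nil.
Definition sinP (v : nat) : Poly := (1, upde e0 v (0,1)%nat) :: nil.

Lemma prodv_mult n f g : prodv n (fun w => f w * g w) = prodv n f * prodv n g.
Proof. induction n; simpl; [ring|]. rewrite IHn. ring. Qed.

Lemma prodv_one n : prodv n (fun _ => 1) = 1.
Proof. induction n; simpl; [ring|]. rewrite IHn. ring. Qed.

Lemma mu_add p1 q1 p2 q2 t : mu (p1 + p2, q1 + q2)%nat t = mu (p1, q1) t * mu (p2, q2) t.
Proof. unfold mu; simpl. rewrite !pow_add. ring. Qed.

Lemma evalM_mul m1 m2 x : evalM (mulM m1 m2) x = evalM m1 x * evalM m2 x.
Proof.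
  unfold evalM, mulM. cbn [fst snd].
  rewrite (prodv_ext NV _ (fun w => mu (snd m1 w) (x w) * mu (snd m2 w) (x w))).
  - rewrite prodv_mult. ring.
  - intros w _. destruct (snd m1 w), (snd m2 w). simpl. apply mu_add.
Qed.

Lemma evalP_map_mul m Q x : evalP (map (mulM m) Q) x = evalM m x * evalP Q x.
Proof. induction Q; simpl; [ring|]. rewrite IHQ, evalM_mul. ring. Qed.

Lemma evalP_mul P Q x : evalP (mulP P Q) x = evalP P x * evalP Q x.
Proof. induction P; simpl; [ring|]. unfold mulP in *. simpl. rewrite evalP_app, IHP, evalP_map_mul. ring. Qed.

Lemma evalP_scal r P x : evalP (scalP r P) x = r * evalP P x.
Proof. induction P; simpl; [ring|]. rewrite IHP. unfold evalM. simpl. ring. Qed.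

Lemma evalP_const r x : evalP (constP r) x = r.
Proof. unfold constP, evalP, evalM, e0. cbn [fst snd].
  rewrite (prodv_ext NV _ (fun _ => 1)). rewrite prodv_one. ring.
  intros; apply mu00. Qed.

Lemma evalP_cos v x : (v < NV)%nat -> evalP (cosP v) x = cos (x v).
Proof. intros Hv. unfold cosP. simpl evalP. rewrite evalM_split by auto.
  unfold others, e0. rewrite (prodv_ext NV _ (fun _ => 1)). rewrite prodv_one. unfold mu; simpl; ring.
  intros w _. destruct (Nat.eqb w v); auto. apply mu00. Qed.

Lemma evalP_sin v x : (v < NV)%nat -> evalP (sinP v) x = sin (x v).
Proof. intros Hv. unfold sinP. simpl evalP. rewrite evalM_split by auto.
  unfold others, e0. rewrite (prodv_ext NV _ (fun _ => 1)). rewrite prodv_one. unfold mu; simpl; ring.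
  intros w _. destruct (Nat.eqb w v); auto. apply mu00. Qed.

Definition Rep (f : (nat -> R) -> R) : Prop := exists P, forall x, f x = evalP P x.

Lemma Rep_ext f g : Rep f -> (forall x, f x = g x) -> Rep g.
Proof. intros [P HP] H. exists P. intro x. rewrite <- H. auto. Qed.
Lemma Rep_const r : Rep (fun _ => r).
Proof. exists (constP r). intro. rewrite evalP_const. auto. Qed.
Lemma Rep_cos v : (v < NV)%nat -> Rep (fun x => cos (x v)).
Proof. intros. exists (cosP v). intro. rewrite evalP_cos; auto. Qed.
Lemma Rep_sin v : (v < NV)%nat -> Rep (fun x => sin (x v)).
Proof. intros. exists (sinP v). intro. rewrite evalP_sin; auto. Qed.
Lemma Rep_plus f g : Rep f -> Rep g -> Rep (fun x => f x + g x).
Proof. intros [P HP] [Q HQ]. exists (P ++ Q). intro. rewrite evalP_app, HP, HQ. auto. Qed.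
Lemma Rep_mult f g : Rep f -> Rep g -> Rep (fun x => f x * g x).
Proof. intros [P HP] [Q HQ]. exists (mulP P Q). intro. rewrite evalP_mul, HP, HQ. auto. Qed.
Lemma Rep_scal r f : Rep f -> Rep (fun x => r * f x).
Proof. intros. apply Rep_mult; auto. apply Rep_const. Qed.
Lemma Rep_opp f : Rep f -> Rep (fun x => - f x).
Proof. intros H. apply (Rep_ext (fun x => -1 * f x)). apply Rep_scal; auto. intros; ring. Qed.
Lemma Rep_minus f g : Rep f -> Rep g -> Rep (fun x => f x - g x).
Proof. intros. apply Rep_plus; auto. apply Rep_opp; auto. Qed.
Lemma Rep_pow f n : Rep f -> Rep (fun x => f x ^ n).
Proof. intros H. induction n; simpl. apply Rep_const. apply Rep_mult; auto. Qed.

Definition Dv (v : nat) (f : (nat -> R) -> R) (x : nat -> R) : R :=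
  Derive (fun t => f (upd x v t)) (x v).
Definition Int (v : nat) (lo hi : R) (f : (nat -> R) -> R) (x : nat -> R) : R :=
  RInt (fun t => f (upd x v t)) lo hi.

Lemma Dv_evalP f P v x : (v < NV)%nat -> (forall y, f y = evalP P y) ->
  Dv v f x = evalP (dP v P) x.
Proof.
  intros Hv HP. unfold Dv. rewrite (Derive_ext _ (fun t => evalP P (upd x v t))) by auto.
  apply is_derive_unique. rewrite <- (upd_same x v) at 2. apply is_derive_evalP; auto.
Qed.

Lemma Int_evalP f P v lo hi x : (v < NV)%nat -> (forall y, f y = evalP P y) ->
  Int v lo hi f x = evalP (intP v lo hi P) x.
Proof.
  intros Hv HP. unfold Int. rewrite (RInt_ext _ (fun t => evalP P (upd x v t))) by auto.
  apply (is_RInt_unique (V:=R_CompleteNormedModule)). apply is_RInt_evalP; auto.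
Qed.

Lemma Rep_Dv v f : (v < NV)%nat -> Rep f -> Rep (Dv v f).
Proof. intros Hv [P HP]. exists (dP v P). intro x. apply Dv_evalP; auto. Qed.

Lemma Rep_Int v lo hi f : (v < NV)%nat -> Rep f -> Rep (Int v lo hi f).
Proof. intros Hv [P HP]. exists (intP v lo hi P). intro x. apply Int_evalP; auto. Qed.

Lemma Rep_is_derive f v x t0 : (v < NV)%nat -> Rep f ->
  is_derive (fun t => f (upd x v t)) t0 (Dv v f (upd x v t0)).
Proof.
  intros Hv [P HP]. rewrite (Dv_evalP f P) by auto.
  apply (is_derive_ext (fun t => evalP P (upd x v t))). intros; auto.
  apply is_derive_evalP; auto.
Qed.

Lemma Rep_ex_derive f v x t0 : (v < NV)%nat -> Rep f -> ex_derive (fun t => f (upd x v t)) t0.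
Proof. intros. eexists. apply Rep_is_derive; auto. Qed.

Lemma Rep_continuous f v x t0 : (v < NV)%nat -> Rep f -> continuous (fun t => f (upd x v t)) t0.
Proof. intros. apply (ex_derive_continuous (fun t => f (upd x v t))). apply Rep_ex_derive; auto. Qed.

Lemma Rep_is_RInt f v x lo hi : (v < NV)%nat -> Rep f ->
  is_RInt (fun t => f (upd x v t)) lo hi (Int v lo hi f x).
Proof.
  intros Hv [P HP]. rewrite (Int_evalP f P) by auto.
  apply (is_RInt_ext (fun t => evalP P (upd x v t))). intros; auto.
  apply is_RInt_evalP; auto.
Qed.

Lemma Rep_ex_RInt f v x lo hi : (v < NV)%nat -> Rep f -> ex_RInt (fun t => f (upd x v t)) lo hi.
Proof. intros. eexists. apply Rep_is_RInt; auto. Qed.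

Lemma is_RInt_plusR (f g : R -> R) lo hi l1 l2 :
  is_RInt f lo hi l1 -> is_RInt g lo hi l2 -> is_RInt (fun t => f t + g t) lo hi (l1 + l2).
Proof. intros H1 H2. apply (is_RInt_plus (V:=R_NormedModule) f g lo hi l1 l2 H1 H2). Qed.

Lemma RInt_uniqR (f : R -> R) lo hi l : is_RInt f lo hi l -> RInt f lo hi = l.
Proof. intros H. apply (is_RInt_unique (V:=R_CompleteNormedModule)). exact H. Qed.

Lemma Int_ext v lo hi f g x : (forall y, f y = g y) -> Int v lo hi f x = Int v lo hi g x.
Proof. intros H. unfold Int. apply RInt_ext. intros; auto. Qed.

Lemma Int_plus v lo hi f g x : (v < NV)%nat -> Rep f -> Rep g ->
  Int v lo hi (fun y => f y + g y) x = Int v lo hi f x + Int v lo hi g x.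
Proof. intros Hv Hf Hg. unfold Int at 1. apply RInt_uniqR.
  apply is_RInt_plusR; apply Rep_is_RInt; auto. Qed.

Lemma Int_scal v lo hi k f x : (v < NV)%nat -> Rep f -> (forall t, k (upd x v t) = k x) ->
  Int v lo hi (fun y => k y * f y) x = k x * Int v lo hi f x.
Proof. intros Hv Hf Hk. unfold Int at 1. apply RInt_uniqR.
  apply (is_RInt_ext (fun t => k x * f (upd x v t))). { intros; rewrite Hk; auto. }
  apply is_RInt_scalR. apply Rep_is_RInt; auto. Qed.

Lemma Int_zero v lo hi f x : (forall y, f y = 0) -> Int v lo hi f x = 0.
Proof. intros H. unfold Int. apply RInt_uniqR.
  apply (is_RInt_ext (fun _ => 0)). { intros; rewrite H; auto. } apply is_RInt_0. Qed.

Lemma Int_opp v lo hi f x : (v < NV)%nat -> Rep f ->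
  Int v lo hi (fun y => - f y) x = - Int v lo hi f x.
Proof. intros Hv Hf. rewrite (Int_ext v lo hi _ (fun y => (fun _ => -1) y * f y)) by (intros; ring).
  rewrite Int_scal; auto. ring. Qed.

Lemma Int_upd v lo hi f x t : Int v lo hi f (upd x v t) = Int v lo hi f x.
Proof. unfold Int. apply RInt_ext. intros. rewrite upd_upd. auto. Qed.

Lemma Dv_ext v f g x : (forall y, f y = g y) -> Dv v f x = Dv v g x.
Proof. intros H. unfold Dv. apply Derive_ext. intros; auto. Qed.

Lemma Dv_plus v f g x : (v < NV)%nat -> Rep f -> Rep g ->
  Dv v (fun y => f y + g y) x = Dv v f x + Dv v g x.
Proof. intros Hv Hf Hg. unfold Dv.
  apply (Derive_plus (fun t => f (upd x v t)) (fun t => g (upd x v t))); apply Rep_ex_derive; auto. Qed.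

Lemma Dv_mult v f g x : (v < NV)%nat -> Rep f -> Rep g ->
  Dv v (fun y => f y * g y) x = Dv v f x * g x + f x * Dv v g x.
Proof. intros Hv Hf Hg. unfold Dv.
  rewrite (Derive_mult (fun t => f (upd x v t)) (fun t => g (upd x v t))) by (apply Rep_ex_derive; auto).
  rewrite upd_same. auto. Qed.

Lemma Dv_const v r x : Dv v (fun _ => r) x = 0.
Proof. unfold Dv. apply Derive_const. Qed.

Lemma Dv_indep v f x : (forall y t, f (upd y v t) = f y) -> Dv v f x = 0.
Proof. intros H. unfold Dv. rewrite (Derive_ext _ (fun _ => f x)). apply Derive_const.
  intros. apply H. Qed.

Lemma Dv_opp v f x : (v < NV)%nat -> Rep f -> Dv v (fun y => - f y) x = - Dv v f x.
Proof. intros Hv Hf. rewrite (Dv_ext v _ (fun y => (fun _ => -1) y * f y)) by (intros; ring).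
  rewrite Dv_mult; auto. rewrite Dv_const. ring. apply Rep_const. Qed.

Lemma Dv_sin v x : (v < NV)%nat -> Dv v (fun y => sin (y v)) x = cos (x v).
Proof. intros Hv. unfold Dv. rewrite (Derive_ext _ sin). apply is_derive_unique.
  apply (is_derive_ext (fun t => sin t)); auto. auto_derive; auto. ring.
  intros; rewrite upd_eq; auto. Qed.

Lemma Dv_cos v x : (v < NV)%nat -> Dv v (fun y => cos (y v)) x = - sin (x v).
Proof. intros Hv. unfold Dv. rewrite (Derive_ext _ cos). apply is_derive_unique.
  apply (is_derive_ext (fun t => cos t)); auto. auto_derive; auto. ring.
  intros; rewrite upd_eq; auto. Qed.

Lemma upde_neq e v a w : w <> v -> upde e v a w = e w.
Proof. intros H. unfold upde. destruct (Nat.eqb_spec w v); auto. lia. Qed.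
Lemma upde_comm e v a w b : v <> w -> upde (upde e v a) w b = upde (upde e w b) v a.
Proof. intros H. apply functional_extensionality; intro u. unfold upde.
  destruct (Nat.eqb_spec u w), (Nat.eqb_spec u v); subst; auto. lia. Qed.

Lemma dP_app v P Q : dP v (P ++ Q) = dP v P ++ dP v Q.
Proof. unfold dP. apply flat_map_app. Qed.

Lemma dP_intP v w lo hi P x : v <> w ->
  evalP (dP w (intP v lo hi P)) x = evalP (intP v lo hi (dP w P)) x.
Proof.
  intros Hvw. induction P as [|[c e] P IH]; simpl; [auto|].
  unfold intP in *. rewrite map_app, !evalP_app. rewrite IH. f_equal.
  unfold dM, intM. rewrite upde_neq by auto. destruct (e w) as [p q] eqn:Ew.
  simpl. rewrite !upde_neq by auto. rewrite !(upde_comm e v _ w) by auto.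
  unfold evalM. cbn [fst snd]. ring.
Qed.

Lemma Dv_Int_comm v w lo hi f x : (v < NV)%nat -> (w < NV)%nat -> v <> w -> Rep f ->
  Dv w (Int v lo hi f) x = Int v lo hi (Dv w f) x.
Proof.
  intros Hv Hw Hvw [P HP].
  rewrite (Dv_evalP _ (intP v lo hi P)) by (auto; intros; apply Int_evalP; auto).
  rewrite (Int_evalP _ (dP w P)) by (auto; intros; apply Dv_evalP; auto).
  apply dP_intP; auto.
Qed.

Lemma Int_Dv v lo hi g x : (v < NV)%nat -> Rep g ->
  Int v lo hi (Dv v g) x = g (upd x v hi) - g (upd x v lo).
Proof.
  intros Hv Hg. unfold Int. apply RInt_uniqR.
  apply (is_RInt_derive (V:=R_CompleteNormedModule) (fun t => g (upd x v t))).
  - intros t _. apply Rep_is_derive; auto.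
  - intros t _. apply Rep_continuous; auto. apply Rep_Dv; auto.
Qed.

Lemma evalP_trig_ext P y z : (forall w, cos (y w) = cos (z w) /\ sin (y w) = sin (z w)) ->
  evalP P y = evalP P z.
Proof.
  intros H. induction P as [|m P IH]; simpl; auto. rewrite IH. f_equal.
  unfold evalM. f_equal. apply prodv_ext. intros w _. unfold mu.
  destruct (H w) as [H1 H2]. rewrite H1, H2. auto.
Qed.

Lemma Rep_periodic f v x : Rep f -> f (upd x v (2 * PI)) = f (upd x v 0).
Proof.
  intros [P HP]. rewrite !HP. apply evalP_trig_ext. intro w. unfold upd.
  destruct (Nat.eqb w v). rewrite cos_2PI, sin_2PI, cos_0, sin_0. auto. auto.
Qed.

Ltac nvlt := match goal with |- (_ < NV)%nat => unfold NV; lia end.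
Ltac rep := repeat (first [ assumption | nvlt | apply Rep_plus | apply Rep_mult | apply Rep_minus
  | apply Rep_opp | apply Rep_Int | apply Rep_Dv | apply Rep_sin | apply Rep_cos | apply Rep_const ]).

Ltac sd := first [ solve [rep] | solve [intros; reflexivity] | solve [auto] ].

Definition PI2 := 2 * PI.
Definition I3 (f : (nat -> R) -> R) : (nat -> R) -> R :=
  Int 1 0 PI2 (Int 2 0 PI (Int 3 0 PI2 f)).

Lemma Rep_I3 f : Rep f -> Rep (I3 f).
Proof. intros; unfold I3; rep. Qed.

Lemma Dv0_I3 f x : Rep f -> Dv 0 (I3 f) x = I3 (Dv 0 f) x.
Proof.
  intros Hf. unfold I3. rewrite Dv_Int_comm by (auto; try nvlt; rep).
  apply Int_ext. intro y. rewrite Dv_Int_comm by (auto; try nvlt; rep).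
  apply Int_ext. intro z. rewrite Dv_Int_comm by (auto; try nvlt; rep). auto.
Qed.

Lemma I3_ext f g x : (forall y, f y = g y) -> I3 f x = I3 g x.
Proof. intros H. unfold I3. apply Int_ext. intro. apply Int_ext. intro. apply Int_ext. auto. Qed.

Lemma const_from_D0 F x t : Rep F -> (forall y, Dv 0 F y = 0) -> F (upd x 0 t) = F (upd x 0 0).
Proof.
  intros HF H0. pose proof (Int_Dv 0 0 t F x) as E.
  rewrite Int_zero in E by auto. assert (F (upd x 0 t) - F (upd x 0 0) = 0) by (rewrite <- E; auto; nvlt). lra.
Qed.

Definition GoodY (f : (nat -> R) -> R) : Prop := Rep f /\ forall x,
  sin (x 2%nat) * Dv 0 f x = sin (x 2%nat) * cos (x 1%nat) * Dv 2 f x - cos (x 2%nat) * sin (x 1%nat) * Dv 1 f x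
     + sin (x 1%nat) * Dv 3 f x.
Definition GoodZ (f : (nat -> R) -> R) : Prop := Rep f /\ forall x, Dv 0 f x = Dv 1 f x.

Lemma GoodY_inv f x t : GoodY f ->
  I3 (fun y => sin (y 2%nat) * f y) (upd x 0 t) = I3 (fun y => sin (y 2%nat) * f y) (upd x 0 0).
Proof.
  intros [Hf HD]. apply const_from_D0. apply Rep_I3; rep.
  intro y. rewrite Dv0_I3 by rep.
  set (F3 := Int 3 0 PI2 f).
  assert (RF3 : Rep F3) by (unfold F3; rep).
  set (H := Int 2 0 PI (fun z => cos (z 2%nat) * F3 z)).
  assert (RH : Rep H) by (unfold H; rep).
  assert (S1 : forall z, Int 3 0 PI2 (Dv 0 (fun y => sin (y 2%nat) * f y)) z =
     sin (z 2%nat) * cos (z 1%nat) * Dv 2 F3 z - cos (z 2%nat) * sin (z 1%nat) * Dv 1 F3 z).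
  { intro z.
    rewrite (Int_ext 3 0 PI2 _ (fun y => (sin (y 2%nat) * cos (y 1%nat) * Dv 2 f y
        + (- (cos (y 2%nat) * sin (y 1%nat)) * Dv 1 f y)) + sin (y 1%nat) * Dv 3 f y)).
    2:{ intro w. rewrite Dv_mult by rep. rewrite (Dv_indep 0 (fun y => sin (y 2%nat))) by (intros; reflexivity).
        rewrite HD. ring. }
    rewrite Int_plus by rep. rewrite Int_plus by rep.
    rewrite !Int_scal by sd.
    rewrite Int_Dv by rep. rewrite Rep_periodic by auto.
    unfold F3. rewrite !Dv_Int_comm by (auto; try nvlt; rep). ring. }
  assert (S2 : forall z, Int 2 0 PI (Int 3 0 PI2 (Dv 0 (fun y => sin (y 2%nat) * f y))) z =
     - cos (z 1%nat) * H z - sin (z 1%nat) * Dv 1 H z).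
  { intro z. rewrite (Int_ext 2 0 PI _ _ z S1).
    rewrite (Int_ext 2 0 PI _ (fun y => cos (y 1%nat) * (sin (y 2%nat) * Dv 2 F3 y)
        + (- sin (y 1%nat)) * (cos (y 2%nat) * Dv 1 F3 y))) by (intros; ring).
    rewrite Int_plus by rep.
    rewrite (Int_scal 2 0 PI (fun y => cos (y 1%nat)) (fun y => sin (y 2%nat) * Dv 2 F3 y)) by sd.
    rewrite (Int_scal 2 0 PI (fun y => - sin (y 1%nat)) (fun y => cos (y 2%nat) * Dv 1 F3 y)) by sd.
    (* sin b * D2 F3 = D2 (sin b F3) - cos b F3 *)
    rewrite (Int_ext 2 0 PI (fun y => sin (y 2%nat) * Dv 2 F3 y) (fun y => Dv 2 (fun w => sin (w 2%nat) * F3 w) y + (- (cos (y 2%nat) * F3 y)))).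
    2:{ intro w. rewrite Dv_mult by rep. rewrite Dv_sin by nvlt. ring. }
    rewrite Int_plus by rep. rewrite Int_Dv by rep. rewrite Int_opp by rep.
    rewrite !upd_eq, sin_PI, sin_0.
    (* cos b * D1 F3 = D1 (cos b F3) *)
    rewrite (Int_ext 2 0 PI (fun y => cos (y 2%nat) * Dv 1 F3 y) (Dv 1 (fun w => cos (w 2%nat) * F3 w))).
    2:{ intro w. rewrite Dv_mult by rep. rewrite (Dv_indep 1 (fun y => cos (y 2%nat))) by (intros; reflexivity). ring. }
    rewrite <- Dv_Int_comm by (auto; try nvlt; rep). fold H. unfold H. ring. }
  unfold I3. rewrite (Int_ext 1 0 PI2 _ _ y S2).
  rewrite (Int_ext 1 0 PI2 _ (fun w => - Dv 1 (fun u => sin (u 1%nat) * H u) w)).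
  2:{ intro w. rewrite Dv_mult by rep. rewrite Dv_sin by nvlt. ring. }
  rewrite Int_opp by rep. rewrite Int_Dv by rep. unfold PI2. rewrite !upd_eq, sin_2PI, sin_0. ring.
Qed.

Lemma GoodZ_inv f x t : GoodZ f ->
  I3 (fun y => sin (y 2%nat) * f y) (upd x 0 t) = I3 (fun y => sin (y 2%nat) * f y) (upd x 0 0).
Proof.
  intros [Hf HD]. apply const_from_D0. apply Rep_I3; rep.
  intro y. rewrite Dv0_I3 by rep.
  set (W := fun y => sin (y 2%nat) * f y).
  assert (RW : Rep W) by (unfold W; rep).
  rewrite (I3_ext _ (Dv 1 W)).
  2:{ intro z. unfold W. rewrite !Dv_mult by rep.
      rewrite (Dv_indep 1 (fun y => sin (y 2%nat))) by (intros; reflexivity).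
      rewrite (Dv_indep 0 (fun y => sin (y 2%nat))) by (intros; reflexivity). rewrite HD. ring. }
  unfold I3.
  rewrite (Int_ext 1 0 PI2 _ (Dv 1 (Int 2 0 PI (Int 3 0 PI2 W)))).
  2:{ intro z. rewrite Dv_Int_comm by (auto; try nvlt; rep). apply Int_ext. intro u.
      rewrite Dv_Int_comm by (auto; try nvlt; rep). auto. }
  rewrite Int_Dv by rep. unfold PI2. rewrite Rep_periodic by rep. ring.
Qed.

Definition Good (k0 k1 k2 k3 : (nat -> R) -> R) (f : (nat -> R) -> R) : Prop :=
  Rep f /\ forall x, k0 x * Dv 0 f x + k1 x * Dv 1 f x + k2 x * Dv 2 f x + k3 x * Dv 3 f x = 0.

Section GoodClosure.
Variables k0 k1 k2 k3 : (nat -> R) -> R.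

Lemma Good_ext f g : Good k0 k1 k2 k3 f -> (forall x, f x = g x) -> Good k0 k1 k2 k3 g.
Proof.
  intros [Hf HD] E. split. apply (Rep_ext f); auto.
  intro x. rewrite <- (HD x). rewrite !(Dv_ext _ g f) by auto. auto.
Qed.

Lemma Good_const r : Good k0 k1 k2 k3 (fun _ => r).
Proof. split. apply Rep_const. intro x. rewrite !Dv_const. ring. Qed.

Lemma Good_plus f g : Good k0 k1 k2 k3 f -> Good k0 k1 k2 k3 g -> Good k0 k1 k2 k3 (fun x => f x + g x).
Proof.
  intros [Hf Df] [Hg Dg]. split. rep. intro x.
  rewrite !Dv_plus by (auto; nvlt). specialize (Df x). specialize (Dg x). nra.
Qed.

Lemma Good_mult f g : Good k0 k1 k2 k3 f -> Good k0 k1 k2 k3 g -> Good k0 k1 k2 k3 (fun x => f x * g x).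
Proof.
  intros [Hf Df] [Hg Dg]. split. rep. intro x.
  rewrite !Dv_mult by (auto; nvlt). specialize (Df x). specialize (Dg x).
  transitivity ((k0 x * Dv 0 f x + k1 x * Dv 1 f x + k2 x * Dv 2 f x + k3 x * Dv 3 f x) * g x +
                f x * (k0 x * Dv 0 g x + k1 x * Dv 1 g x + k2 x * Dv 2 g x + k3 x * Dv 3 g x)).
  ring. rewrite Df, Dg. ring.
Qed.

Lemma Good_opp f : Good k0 k1 k2 k3 f -> Good k0 k1 k2 k3 (fun x => - f x).
Proof. intros H. apply (Good_ext (fun x => (fun _ => -1) x * f x)). apply Good_mult; auto. apply Good_const.
  intros; ring. Qed.

Lemma Good_minus f g : Good k0 k1 k2 k3 f -> Good k0 k1 k2 k3 g -> Good k0 k1 k2 k3 (fun x => f x - g x).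
Proof. intros. apply Good_plus; auto. apply Good_opp; auto. Qed.

Lemma Good_pow f n : Good k0 k1 k2 k3 f -> Good k0 k1 k2 k3 (fun x => f x ^ n).
Proof. intros H. induction n; simpl. apply Good_const. apply Good_mult; auto. Qed.

End GoodClosure.

Definition kY0 (x : nat -> R) := sin (x 2%nat).
Definition kY1 (x : nat -> R) := cos (x 2%nat) * sin (x 1%nat).
Definition kY2 (x : nat -> R) := - (sin (x 2%nat) * cos (x 1%nat)).
Definition kY3 (x : nat -> R) := - sin (x 1%nat).
Definition kZ0 (x : nat -> R) := 1.
Definition kZ1 (x : nat -> R) := -1.
Definition kZ2 (x : nat -> R) := 0.
Definition kZ3 (x : nat -> R) := 0.

Lemma Good_GoodY f : Good kY0 kY1 kY2 kY3 f -> GoodY f.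
Proof. intros [Hf HD]. split; auto. intro x. specialize (HD x). unfold kY0, kY1, kY2, kY3 in HD. lra. Qed.
Lemma Good_GoodZ f : Good kZ0 kZ1 kZ2 kZ3 f -> GoodZ f.
Proof. intros [Hf HD]. split; auto. intro x. specialize (HD x). unfold kZ0, kZ1, kZ2, kZ3 in HD. lra. Qed.

Definition dRy (t : R) : mat3 := fun i j =>
  match i, j with
  | 0%nat, 0%nat => - sin t | 0%nat, 2%nat => cos t
  | 2%nat, 0%nat => - cos t | 2%nat, 2%nat => - sin t
  | _, _ => 0 end.
Definition dRz (t : R) : mat3 := fun i j =>
  match i, j with
  | 0%nat, 0%nat => - sin t | 0%nat, 1%nat => - cos t
  | 1%nat, 0%nat => cos t | 1%nat, 1%nat => - sin t
  | _, _ => 0 end.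

Lemma is_derive_Ry i j t : is_derive (fun s => Ry s i j) t (dRy t i j).
Proof.
  unfold Ry, dRy. destruct i as [|[|[|i]]]; destruct j as [|[|[|j]]];
  auto_derive; auto; ring.
Qed.
Lemma is_derive_Rz i j t : is_derive (fun s => Rz s i j) t (dRz t i j).
Proof.
  unfold Rz, dRz. destruct i as [|[|[|i]]]; destruct j as [|[|[|j]]];
  auto_derive; auto; ring.
Qed.

Lemma is_derive_mulc_r (f : R -> R) t d c : is_derive f t d -> is_derive (fun s => f s * c) t (d * c).
Proof. intros H. apply (is_derive_ext (fun s => c * f s)). intros; apply Rmult_comm.
  replace (d * c) with (c * d) by ring. apply is_derive_scal. auto. Qed.
Lemma is_derive_mulc_l (f : R -> R) t d c : is_derive f t d -> is_derive (fun s => c * f s) t (c * d).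
Proof. intros H. apply is_derive_scal. auto. Qed.

Lemma is_derive_plus3 (f g h : R -> R) t df dg dh : is_derive f t df -> is_derive g t dg -> is_derive h t dh ->
  is_derive (fun s => f s + g s + h s) t (df + dg + dh).
Proof. intros. apply (is_derive_plus (fun s => f s + g s)); auto. apply (is_derive_plus f g); auto. Qed.

Lemma is_derive_mm_l (F : R -> mat3) F' B i j t :
  (forall i k, is_derive (fun s => F s i k) t (F' i k)) ->
  is_derive (fun s => mat_mul (F s) B i j) t (mat_mul F' B i j).
Proof. intros H. unfold mat_mul. apply is_derive_plus3; apply is_derive_mulc_r; auto. Qed.

Lemma is_derive_mm_r A (F : R -> mat3) F' i j t :
  (forall k j, is_derive (fun s => F s k j) t (F' k j)) ->
  is_derive (fun s => mat_mul A (F s) i j) t (mat_mul A F' i j).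
Proof. intros H. unfold mat_mul. apply is_derive_plus3; apply is_derive_mulc_l; auto. Qed.

Definition MY (x : nat -> R) : mat3 := mat_mul (Ry (x 0%nat)) (euler (x 1%nat) (x 2%nat) (x 3%nat)).
Definition MZ (x : nat -> R) : mat3 := mat_mul (Rz (x 0%nat)) (euler (x 1%nat) (x 2%nat) (x 3%nat)).

Section Entries.
Variable R0 dR0 : R -> mat3.
Hypothesis HR0 : forall i j t, is_derive (fun s => R0 s i j) t (dR0 t i j).
Definition MG (x : nat -> R) : mat3 := mat_mul (R0 (x 0%nat)) (euler (x 1%nat) (x 2%nat) (x 3%nat)).

Lemma Dv0_MG i j x : Dv 0 (fun y => MG y i j) x = mat_mul (dR0 (x 0%nat)) (euler (x 1%nat) (x 2%nat) (x 3%nat)) i j.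
Proof. unfold Dv. apply is_derive_unique.
  apply (is_derive_ext (fun s => mat_mul (R0 s) (euler (x 1%nat) (x 2%nat) (x 3%nat)) i j)). intros; reflexivity.
  apply is_derive_mm_l. auto. Qed.

Lemma Dv1_MG i j x : Dv 1 (fun y => MG y i j) x =
  mat_mul (R0 (x 0%nat)) (mat_mul (dRz (x 1%nat)) (mat_mul (Ry (x 2%nat)) (Rz (x 3%nat)))) i j.
Proof. unfold Dv. apply is_derive_unique.
  apply (is_derive_ext (fun s => mat_mul (R0 (x 0%nat)) (mat_mul (Rz s) (mat_mul (Ry (x 2%nat)) (Rz (x 3%nat)))) i j)). intros; reflexivity.
  apply is_derive_mm_r. intros. apply is_derive_mm_l. intros; apply is_derive_Rz. Qed.

Lemma Dv2_MG i j x : Dv 2 (fun y => MG y i j) x =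
  mat_mul (R0 (x 0%nat)) (mat_mul (Rz (x 1%nat)) (mat_mul (dRy (x 2%nat)) (Rz (x 3%nat)))) i j.
Proof. unfold Dv. apply is_derive_unique.
  apply (is_derive_ext (fun s => mat_mul (R0 (x 0%nat)) (mat_mul (Rz (x 1%nat)) (mat_mul (Ry s) (Rz (x 3%nat)))) i j)). intros; reflexivity.
  apply is_derive_mm_r. intros. apply is_derive_mm_r. intros. apply is_derive_mm_l. intros; apply is_derive_Ry. Qed.

Lemma Dv3_MG i j x : Dv 3 (fun y => MG y i j) x =
  mat_mul (R0 (x 0%nat)) (mat_mul (Rz (x 1%nat)) (mat_mul (Ry (x 2%nat)) (dRz (x 3%nat)))) i j.
Proof. unfold Dv. apply is_derive_unique.
  apply (is_derive_ext (fun s => mat_mul (R0 (x 0%nat)) (mat_mul (Rz (x 1%nat)) (mat_mul (Ry (x 2%nat)) (Rz s))) i j)). intros; reflexivity.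
  apply is_derive_mm_r. intros. apply is_derive_mm_r. intros. apply is_derive_mm_r. intros; apply is_derive_Rz. Qed.
End Entries.

Lemma Rep_Ry v i j : (v < NV)%nat -> Rep (fun x => Ry (x v) i j).
Proof. intros Hv. unfold Ry. destruct i as [|[|[|i]]]; destruct j as [|[|[|j]]]; rep. Qed.
Lemma Rep_Rz v i j : (v < NV)%nat -> Rep (fun x => Rz (x v) i j).
Proof. intros Hv. unfold Rz. destruct i as [|[|[|i]]]; destruct j as [|[|[|j]]]; rep. Qed.

Lemma Rep_mm (A B : (nat -> R) -> mat3) i j : (forall i k, Rep (fun x => A x i k)) -> (forall k j, Rep (fun x => B x k j)) ->
  Rep (fun x => mat_mul (A x) (B x) i j).
Proof. intros HA HB. unfold mat_mul. rep; auto. Qed.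

Lemma Rep_euler i j : Rep (fun x => euler (x 1%nat) (x 2%nat) (x 3%nat) i j).
Proof. unfold euler. apply Rep_mm; intros. apply Rep_Rz; nvlt.
  apply Rep_mm; intros. apply Rep_Ry; nvlt. apply Rep_Rz; nvlt. Qed.

Lemma pyth_cos2 t : cos t ^ 2 = 1 - sin t ^ 2.
Proof. pose proof (sin2_cos2 t). unfold Rsqr in H. nra. Qed.

Lemma GoodY_MY i j : Good kY0 kY1 kY2 kY3 (fun x => MY x i j).
Proof.
  split. unfold MY. apply Rep_mm; intros. apply Rep_Ry; nvlt. apply Rep_euler.
  intro x. unfold MY.
  change (fun y => mat_mul (Ry (y 0%nat)) (euler (y 1%nat) (y 2%nat) (y 3%nat)) i j) with (fun y => MG Ry y i j).
  rewrite (Dv0_MG Ry dRy), (Dv1_MG Ry), (Dv2_MG Ry), (Dv3_MG Ry) by apply is_derive_Ry.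
  unfold kY0, kY1, kY2, kY3, euler, mat_mul, Ry, Rz, dRy, dRz.
  destruct i as [|[|[|i]]]; destruct j as [|[|[|j]]]; ring_simplify; try rewrite !pyth_cos2; ring.
Qed.

Lemma GoodZ_MZ i j : Good kZ0 kZ1 kZ2 kZ3 (fun x => MZ x i j).
Proof.
  split. unfold MZ. apply Rep_mm; intros. apply Rep_Rz; nvlt. apply Rep_euler.
  intro x. unfold MZ.
  change (fun y => mat_mul (Rz (y 0%nat)) (euler (y 1%nat) (y 2%nat) (y 3%nat)) i j) with (fun y => MG Rz y i j).
  rewrite (Dv0_MG Rz dRz), (Dv1_MG Rz), (Dv2_MG Rz), (Dv3_MG Rz) by apply is_derive_Rz.
  unfold kZ0, kZ1, kZ2, kZ3, euler, mat_mul, Ry, Rz, dRy, dRz.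
  destruct i as [|[|[|i]]]; destruct j as [|[|[|j]]]; ring_simplify; try rewrite !pyth_cos2; ring.
Qed.

Inductive UPoly : (R -> R) -> Prop :=
| UP_const c : UPoly (fun _ => c)
| UP_id : UPoly (fun t => t)
| UP_plus f g : UPoly f -> UPoly g -> UPoly (fun t => f t + g t)
| UP_mult f g : UPoly f -> UPoly g -> UPoly (fun t => f t * g t)
| UP_ext f g : UPoly f -> (forall t, f t = g t) -> UPoly g.

Lemma UPoly_derive f : UPoly f -> exists f', UPoly f' /\ forall t, is_derive f t (f' t).
Proof.
  induction 1 as [c| |f g Hf [f' [Hf' Df]] Hg [g' [Hg' Dg]]|f g Hf [f' [Hf' Df]] Hg [g' [Hg' Dg]]|f g Hf [f' [Hf' Df]] E].
  - exists (fun _ => 0). split. constructor. intro t. apply (is_derive_const c).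
  - exists (fun _ => 1). split. constructor. intro t. apply (is_derive_id t).
  - exists (fun t => f' t + g' t). split. constructor; auto. intro t. apply (is_derive_plus f g); auto.
  - exists (fun t => f' t * g t + f t * g' t). split. repeat constructor; auto.
    intro t. apply (is_derive_mult f g); auto. intros; apply Rmult_comm.
  - exists f'. split; auto. intro t. apply (is_derive_ext f); auto.
Qed.

Lemma UPoly_Derive_n f n : UPoly f -> exists g, UPoly g /\ forall t, Derive_n f n t = g t.
Proof.
  intros Hf. induction n as [|n [g [Hg E]]].
  - exists f. split; auto.
  - destruct (UPoly_derive g Hg) as [g' [Hg' Dg]]. exists g'. split; auto.
    intro t. simpl. rewrite (Derive_ext _ g) by auto. apply is_derive_unique. auto.
Qed.

Lemma UPoly_pow f n : UPoly f -> UPoly (fun t => f t ^ n).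
Proof. intros Hf. induction n. exact (UP_const 1). simpl. apply (UP_mult f); auto. Qed.

Lemma UPoly_leg l : UPoly (fun t => (t ^ 2 - 1) ^ l).
Proof. apply (UPoly_pow (fun t => t ^ 2 - 1)).
  apply (UP_plus (fun t => t ^ 2) (fun _ => -1)). apply (UPoly_pow (fun t => t)). constructor. constructor. Qed.

Section GoodMore.
Variables k0 k1 k2 k3 : (nat -> R) -> R.
Local Notation G := (Good k0 k1 k2 k3).

Lemma UPoly_Good f g : UPoly f -> G g -> G (fun x => f (g x)).
Proof.
  intros Hf Hg. induction Hf.
  - apply Good_const.
  - auto.
  - apply (Good_plus k0 k1 k2 k3 (fun x => f (g x)) (fun x => g0 (g x))); auto.
  - apply (Good_mult k0 k1 k2 k3 (fun x => f (g x)) (fun x => g0 (g x))); auto.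
  - apply (Good_ext k0 k1 k2 k3 (fun x => f (g x))); auto.
Qed.

Lemma Good_dLeg l k g : G g -> G (fun x => dLeg l k (g x)).
Proof.
  intros Hg. destruct (UPoly_Derive_n _ (l + k) (UPoly_leg l)) as [h [Hh E]].
  unfold dLeg. apply (Good_ext k0 k1 k2 k3 (fun x => (fun _ => / (2 ^ l * INR (fact l))) x * h (g x))).
  apply Good_mult. apply Good_const. apply UPoly_Good; auto.
  intro x. rewrite E. auto.
Qed.

Definition CGood (F : (nat -> R) -> C) : Prop := G (fun x => fst (F x)) /\ G (fun x => snd (F x)).

Lemma CGood_ext F F' : CGood F -> (forall x, F x = F' x) -> CGood F'.
Proof. intros [H1 H2] E. split; [apply (Good_ext _ _ _ _ _ _ H1)|apply (Good_ext _ _ _ _ _ _ H2)]; intro; rewrite E; auto. Qed.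
Lemma CGood_const z : CGood (fun _ => z).
Proof. split; apply Good_const. Qed.
Lemma CGood_pair f g : G f -> G g -> CGood (fun x => (f x, g x)).
Proof. intros; split; auto. Qed.
Lemma CGood_RtoC f : G f -> CGood (fun x => RtoC (f x)).
Proof. intros; split; simpl; auto. apply Good_const. Qed.
Lemma CGood_plus F F' : CGood F -> CGood F' -> CGood (fun x => Cplus (F x) (F' x)).
Proof. intros [H1 H2] [H3 H4]; split; simpl; apply Good_plus; auto. Qed.
Lemma CGood_mult F F' : CGood F -> CGood F' -> CGood (fun x => Cmult (F x) (F' x)).
Proof. intros [H1 H2] [H3 H4]; split; simpl.
  apply Good_minus; apply Good_mult; auto. apply Good_plus; apply Good_mult; auto. Qed.
Lemma CGood_conj F : CGood F -> CGood (fun x => Cconj (F x)).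
Proof. intros [H1 H2]; split; simpl; auto. apply Good_opp; auto. Qed.
Lemma CGood_pow F n : CGood F -> CGood (fun x => Cpow (F x) n).
Proof. intros H. induction n; simpl. apply CGood_const. apply (CGood_mult F (fun x => Cpow (F x) n)); auto. Qed.
Lemma CGood_csum (F : nat -> (nat -> R) -> C) n : (forall i, CGood (F i)) -> CGood (fun x => csum (fun i => F i x) n).
Proof. intros H. induction n; simpl. apply CGood_const. apply (CGood_plus (fun x => csum (fun i => F i x) n)); auto. Qed.

Lemma CGood_Ypos l k (y : (nat -> R) -> vec3) :
  (forall i, G (fun x => vcoord (y x) i)) -> CGood (fun x => Ypos l k (y x)).
Proof.
  intros Hy. unfold Ypos. apply (CGood_mult (fun x => RtoC _) (fun x => Cpow _ k)).
  - apply CGood_RtoC. apply Good_mult. apply Good_const. apply Good_dLeg; auto.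
  - apply (CGood_pow (fun x => (vcoord (y x) 0, vcoord (y x) 1))). apply CGood_pair; auto.
Qed.

Lemma CGood_Ylm l m (y : (nat -> R) -> vec3) :
  (forall i, G (fun x => vcoord (y x) i)) -> CGood (fun x => Ylm l m (y x)).
Proof.
  intros Hy. unfold Ylm. destruct (0 <=? m)%Z. apply CGood_Ypos; auto.
  apply (CGood_mult (fun _ => RtoC _) (fun x => Cconj (Ypos l _ (y x)))). apply CGood_const.
  apply (CGood_conj (fun x => Ypos l _ (y x))). apply CGood_Ypos; auto.
Qed.

Lemma CGood_shell L A r (y : (nat -> R) -> vec3) :
  (forall i, G (fun x => vcoord (y x) i)) -> CGood (fun x => shell L A r (y x)).
Proof.
  intros Hy. unfold shell.
  apply (CGood_csum (fun l x => csum (fun k => Cmult (A r l (Z.of_nat k - Z.of_nat l)%Z) (Ylm l (Z.of_nat k - Z.of_nat l)%Z (y x))) (2 * l + 1))).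
  intro l. apply (CGood_csum (fun k x => Cmult (A r l (Z.of_nat k - Z.of_nat l)%Z) (Ylm l (Z.of_nat k - Z.of_nat l)%Z (y x)))).
  intro k. apply (CGood_mult (fun _ => _) (fun x => Ylm l _ (y x))). apply CGood_const. apply CGood_Ylm; auto.
Qed.

Lemma Good_rot (M : (nat -> R) -> mat3) p :
  (forall i j, G (fun x => M x i j)) -> forall i, G (fun x => vcoord (rot_inv_apply (M x) p) i).
Proof.
  intros HM i. unfold rot_inv_apply, mat_vec, transpose.
  destruct i as [|[|i]]; simpl; repeat apply Good_plus; apply (Good_mult _ _ _ _ (fun x => M x _ _) (fun _ => _)); auto; apply Good_const.
Qed.

End GoodMore.

Definition mk4 (b0 a b c : R) : nat -> R :=
  fun v => match v with 0%nat => b0 | 1%nat => a | 2%nat => b | 3%nat => c | _ => 0 end.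

Lemma RInt_C_Rep (f g : (nat -> R) -> R) v lo hi x : (v < NV)%nat -> Rep f -> Rep g ->
  RInt (V := C_R_CompleteNormedModule) (fun t => (f (upd x v t), g (upd x v t))) lo hi
  = (Int v lo hi f x, Int v lo hi g x).
Proof.
  intros Hv Hf Hg. apply (is_RInt_unique (V:=C_R_CompleteNormedModule)).
  apply (is_RInt_fct_extend_pair (U:=R_NormedModule) (V:=R_NormedModule)
     (fun t => (f (upd x v t), g (upd x v t)))); simpl; apply Rep_is_RInt; auto.
Qed.

Lemma mk4_upd b0 a b c : upd (upd (upd (mk4 b0 0 0 0) 1 a) 2 b) 3 c = mk4 b0 a b c.
Proof. apply functional_extensionality. intros [|[|[|[|v]]]]; reflexivity. Qed.

Lemma haar_I3 (Fc : (nat -> R) -> C) b0 :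
  Rep (fun x => fst (Fc x)) -> Rep (fun x => snd (Fc x)) ->
  RInt (V:=C_R_CompleteNormedModule) (fun a =>
    RInt (V:=C_R_CompleteNormedModule) (fun b =>
      RInt (V:=C_R_CompleteNormedModule) (fun c => Cmult (RtoC (sin b)) (Fc (mk4 b0 a b c))) 0 (2 * PI)) 0 PI) 0 (2 * PI)
  = (I3 (fun y => sin (y 2%nat) * fst (Fc y)) (mk4 b0 0 0 0), I3 (fun y => sin (y 2%nat) * snd (Fc y)) (mk4 b0 0 0 0)).
Proof.
  intros H1 H2. unfold I3, PI2.
  rewrite <- RInt_C_Rep by (try nvlt; rep).
  apply RInt_ext. intros a _.
  rewrite <- RInt_C_Rep by (try nvlt; rep).
  apply RInt_ext. intros b _.
  rewrite <- RInt_C_Rep by (try nvlt; rep).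
  apply RInt_ext. intros c _.
  rewrite mk4_upd. unfold Cmult, RtoC. simpl. f_equal; ring.
Qed.


Lemma haar_inv_Y (Psi : mat3 -> C) beta :
  CGood kY0 kY1 kY2 kY3 (fun x => Psi (MY x)) ->
  haar_int (fun g => Psi (mat_mul (Ry beta) g)) = haar_int (fun g => Psi (mat_mul (Ry 0) g)).
Proof.
  intros [[H1 D1] [H2 D2]]. unfold haar_int. apply (f_equal (fun z => Cmult (RtoC (/ (8 * PI ^ 2))) z)).
  assert (E : forall t, mk4 t 0 0 0 = upd (mk4 0 0 0 0) 0 t).
  { intros t. apply functional_extensionality. intros [|[|[|[|v]]]]; reflexivity. }
  assert (GY1 : GoodY (fun x => fst (Psi (MY x)))) by (apply Good_GoodY; split; auto).
  assert (GY2 : GoodY (fun x => snd (Psi (MY x)))) by (apply Good_GoodY; split; auto).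
  transitivity (I3 (fun y => sin (y 2%nat) * fst (Psi (MY y))) (mk4 beta 0 0 0),
                I3 (fun y => sin (y 2%nat) * snd (Psi (MY y))) (mk4 beta 0 0 0)).
  { exact (haar_I3 (fun x => Psi (MY x)) beta H1 H2). }
  transitivity (I3 (fun y => sin (y 2%nat) * fst (Psi (MY y))) (mk4 0 0 0 0),
                I3 (fun y => sin (y 2%nat) * snd (Psi (MY y))) (mk4 0 0 0 0)).
  { rewrite (E beta). rewrite (GoodY_inv _ _ beta GY1), (GoodY_inv _ _ beta GY2).
    rewrite <- (E 0). auto. }
  symmetry. exact (haar_I3 (fun x => Psi (MY x)) 0 H1 H2).
Qed.

Lemma haar_inv_Z (Psi : mat3 -> C) beta :
  CGood kZ0 kZ1 kZ2 kZ3 (fun x => Psi (MZ x)) ->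
  haar_int (fun g => Psi (mat_mul (Rz beta) g)) = haar_int (fun g => Psi (mat_mul (Rz 0) g)).
Proof.
  intros [[H1 D1] [H2 D2]]. unfold haar_int. apply (f_equal (fun z => Cmult (RtoC (/ (8 * PI ^ 2))) z)).
  assert (E : forall t, mk4 t 0 0 0 = upd (mk4 0 0 0 0) 0 t).
  { intros t. apply functional_extensionality. intros [|[|[|[|v]]]]; reflexivity. }
  assert (GY1 : GoodZ (fun x => fst (Psi (MZ x)))) by (apply Good_GoodZ; split; auto).
  assert (GY2 : GoodZ (fun x => snd (Psi (MZ x)))) by (apply Good_GoodZ; split; auto).
  transitivity (I3 (fun y => sin (y 2%nat) * fst (Psi (MZ y))) (mk4 beta 0 0 0),
                I3 (fun y => sin (y 2%nat) * snd (Psi (MZ y))) (mk4 beta 0 0 0)).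
  { exact (haar_I3 (fun x => Psi (MZ x)) beta H1 H2). }
  transitivity (I3 (fun y => sin (y 2%nat) * fst (Psi (MZ y))) (mk4 0 0 0 0),
                I3 (fun y => sin (y 2%nat) * snd (Psi (MZ y))) (mk4 0 0 0 0)).
  { rewrite (E beta). rewrite (GoodZ_inv _ _ beta GY1), (GoodZ_inv _ _ beta GY2).
    rewrite <- (E 0). auto. }
  symmetry. exact (haar_I3 (fun x => Psi (MZ x)) 0 H1 H2).
Qed.

Definition Psi (L : nat) (A : coeffs) (r1 r2 : nat) (p1 p2 : vec3) (g : mat3) : C :=
  Cmult (shell L A r1 (rot_inv_apply g p1)) (Cconj (shell L A r2 (rot_inv_apply g p2))).
Definition Gm L A r1 r2 p1 p2 := haar_int (Psi L A r1 r2 p1 p2).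

Lemma m2_Gm L A r1 r2 th1 ph1 th2 ph2 :
  m2 L A r1 r2 th1 ph1 th2 ph2 = Gm L A r1 r2 (sph th1 ph1) (sph th2 ph2).
Proof. reflexivity. Qed.
Lemma m2proj_Gm L A r1 r2 ph1 ph2 :
  m2proj L A r1 r2 ph1 ph2 = Gm L A r1 r2 (sph (PI / 2) ph1) (sph (PI / 2) ph2).
Proof. reflexivity. Qed.

Lemma CGood_Psi k0 k1 k2 k3 (M : (nat -> R) -> mat3) L A r1 r2 p1 p2 :
  (forall i j, Good k0 k1 k2 k3 (fun x => M x i j)) ->
  CGood k0 k1 k2 k3 (fun x => Psi L A r1 r2 p1 p2 (M x)).
Proof.
  intros HM. unfold Psi.
  apply (CGood_mult _ _ _ _ (fun x => shell L A r1 (rot_inv_apply (M x) p1))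
     (fun x => Cconj (shell L A r2 (rot_inv_apply (M x) p2)))).
  apply CGood_shell. apply Good_rot. auto.
  apply (CGood_conj _ _ _ _ (fun x => shell L A r2 (rot_inv_apply (M x) p2))).
  apply CGood_shell. apply Good_rot. auto.
Qed.

Lemma vec3_eq (a b c a' b' c' : R) : a = a' -> b = b' -> c = c' -> ((a, b), c) = ((a', b'), c').
Proof. intros -> -> ->. reflexivity. Qed.

Lemma rot_Ry g p a : rot_inv_apply g (mat_vec (Ry a) p) = rot_inv_apply (mat_mul (Ry (- a)) g) p.
Proof. destruct p as [[p0 p1] p2]. unfold rot_inv_apply, mat_vec, transpose, mat_mul, Ry. simpl.
  rewrite cos_neg, sin_neg. apply vec3_eq; ring. Qed.
Lemma rot_Rz g p a : rot_inv_apply g (mat_vec (Rz a) p) = rot_inv_apply (mat_mul (Rz (- a)) g) p.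
Proof. destruct p as [[p0 p1] p2]. unfold rot_inv_apply, mat_vec, transpose, mat_mul, Rz. simpl.
  rewrite cos_neg, sin_neg. apply vec3_eq; ring. Qed.
Lemma rot_Ry0 g p : rot_inv_apply (mat_mul (Ry 0) g) p = rot_inv_apply g p.
Proof. destruct p as [[p0 p1] p2]. unfold rot_inv_apply, mat_vec, transpose, mat_mul, Ry. simpl.
  rewrite cos_0, sin_0. apply vec3_eq; ring. Qed.
Lemma rot_Rz0 g p : rot_inv_apply (mat_mul (Rz 0) g) p = rot_inv_apply g p.
Proof. destruct p as [[p0 p1] p2]. unfold rot_inv_apply, mat_vec, transpose, mat_mul, Rz. simpl.
  rewrite cos_0, sin_0. apply vec3_eq; ring. Qed.

Lemma Gm_invY L A r1 r2 p1 p2 a :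
  Gm L A r1 r2 (mat_vec (Ry a) p1) (mat_vec (Ry a) p2) = Gm L A r1 r2 p1 p2.
Proof.
  unfold Gm.
  replace (Psi L A r1 r2 (mat_vec (Ry a) p1) (mat_vec (Ry a) p2)) with
    (fun g => Psi L A r1 r2 p1 p2 (mat_mul (Ry (- a)) g)).
  2:{ apply functional_extensionality. intro g. unfold Psi. rewrite !rot_Ry. reflexivity. }
  rewrite (haar_inv_Y (Psi L A r1 r2 p1 p2) (- a)).
  2:{ apply CGood_Psi. intros. apply GoodY_MY. }
  replace (fun g => Psi L A r1 r2 p1 p2 (mat_mul (Ry 0) g)) with (Psi L A r1 r2 p1 p2).
  reflexivity.
  apply functional_extensionality. intro g. unfold Psi. rewrite !rot_Ry0. reflexivity.
Qed.

Lemma Gm_invZ L A r1 r2 p1 p2 a :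
  Gm L A r1 r2 (mat_vec (Rz a) p1) (mat_vec (Rz a) p2) = Gm L A r1 r2 p1 p2.
Proof.
  unfold Gm.
  replace (Psi L A r1 r2 (mat_vec (Rz a) p1) (mat_vec (Rz a) p2)) with
    (fun g => Psi L A r1 r2 p1 p2 (mat_mul (Rz (- a)) g)).
  2:{ apply functional_extensionality. intro g. unfold Psi. rewrite !rot_Rz. reflexivity. }
  rewrite (haar_inv_Z (Psi L A r1 r2 p1 p2) (- a)).
  2:{ apply CGood_Psi. intros. apply GoodZ_MZ. }
  replace (fun g => Psi L A r1 r2 p1 p2 (mat_mul (Rz 0) g)) with (Psi L A r1 r2 p1 p2).
  reflexivity.
  apply functional_extensionality. intro g. unfold Psi. rewrite !rot_Rz0. reflexivity.
Qed.

Lemma polar u v : exists g, u = sqrt (u ^ 2 + v ^ 2) * cos g /\ v = sqrt (u ^ 2 + v ^ 2) * sin g.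
Proof.
  set (r := sqrt (u ^ 2 + v ^ 2)).
  assert (Hr2 : r * r = u ^ 2 + v ^ 2) by (unfold r; apply sqrt_sqrt; nra).
  assert (Hr0 : 0 <= r) by apply sqrt_pos.
  destruct (Req_dec r 0) as [Hz|Hnz].
  - exists 0. rewrite Hz in Hr2. assert (u = 0) by nra. assert (v = 0) by nra.
    rewrite Hz. split; lra.
  - assert (Hrp : 0 < r) by lra.
    set (c := u / r).
    assert (Hcc : c * c <= 1).
    { unfold c. replace (u / r * (u / r)) with ((u * u) / (r * r)) by (field; lra).
      apply Rmult_le_reg_r with (r * r). nra. unfold Rdiv. rewrite Rmult_assoc, Rinv_l by nra. nra. }
    assert (Hc : -1 <= c <= 1) by (split; nra).
    assert (H1 : 1 - c² = (v / r)²).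
    { unfold c, Rsqr. replace (u / r * (u / r)) with (u * u / (r * r)) by (field; lra).
      replace (v / r * (v / r)) with (v * v / (r * r)) by (field; lra).
      replace (u * u) with (r * r - v * v) by nra. field. lra. }
    destruct (Rle_dec 0 v) as [Hv|Hv].
    + exists (acos c). rewrite cos_acos, sin_acos by auto. rewrite H1.
      rewrite sqrt_Rsqr. split; unfold c; field; lra.
      apply Rmult_le_pos; auto. left; apply Rinv_0_lt_compat; auto.
    + exists (- acos c). rewrite cos_neg, sin_neg, cos_acos, sin_acos by auto. rewrite H1.
      replace ((v / r)²) with ((- v / r)²) by (unfold Rsqr; field; lra).
      rewrite sqrt_Rsqr. split; unfold c; field; lra.
      unfold Rdiv. apply Rmult_le_pos. lra. left; apply Rinv_0_lt_compat; auto.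
Qed.

Lemma mv_Rz a x y z : mat_vec (Rz a) ((x, y), z) = ((cos a * x - sin a * y, sin a * x + cos a * y), z).
Proof. unfold mat_vec, Rz. simpl. apply vec3_eq; ring. Qed.
Lemma mv_Ry a x y z : mat_vec (Ry a) ((x, y), z) = ((cos a * x + sin a * z, y), - sin a * x + cos a * z).
Proof. unfold mat_vec, Ry. simpl. apply vec3_eq; ring. Qed.

Definition nrm2 (p : vec3) : R := match p with ((x, y), z) => x ^ 2 + y ^ 2 + z ^ 2 end.

Lemma pyth_sin2 t : sin t ^ 2 = 1 - cos t ^ 2.
Proof. rewrite pyth_cos2. ring. Qed.

Lemma nrm2_Rz a p : nrm2 (mat_vec (Rz a) p) = nrm2 p.
Proof. destruct p as [[x y] z]. rewrite mv_Rz. simpl nrm2. ring_simplify. rewrite !pyth_sin2. ring. Qed.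
Lemma nrm2_Ry a p : nrm2 (mat_vec (Ry a) p) = nrm2 p.
Proof. destruct p as [[x y] z]. rewrite mv_Ry. simpl nrm2. ring_simplify. rewrite !pyth_sin2. ring. Qed.
Lemma nrm2_sph th ph : nrm2 (sph th ph) = 1.
Proof. unfold sph. simpl nrm2. ring_simplify. rewrite !pyth_sin2. ring. Qed.

Lemma geom th1 ph1 th2 ph2 : exists psi, forall L A r1 r2,
  Gm L A r1 r2 (sph th1 ph1) (sph th2 ph2) = Gm L A r1 r2 (sph (PI / 2) 0) (sph (PI / 2) psi).
Proof.
  set (T1 := fun v => mat_vec (Ry (PI / 2 - th1)) (mat_vec (Rz (- ph1)) v)).
  assert (ET1 : T1 (sph th1 ph1) = ((1, 0), 0)).
  { unfold T1, sph. rewrite mv_Rz, mv_Ry. rewrite cos_neg, sin_neg, cos_shift, sin_shift.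
    apply vec3_eq.
    - transitivity (sin th1 ^ 2 * (cos ph1 ^ 2 + sin ph1 ^ 2) + cos th1 ^ 2). ring.
      rewrite pyth_cos2. ring_simplify. rewrite pyth_sin2. ring.
    - ring.
    - transitivity (- cos th1 * sin th1 * (cos ph1 ^ 2 + sin ph1 ^ 2) + sin th1 * cos th1). ring.
      rewrite pyth_cos2. ring. }
  destruct (T1 (sph th2 ph2)) as [[qx qy] qz] eqn:EQ.
  assert (Hn : qx ^ 2 + qy ^ 2 + qz ^ 2 = 1).
  { change (nrm2 ((qx, qy), qz) = 1). rewrite <- EQ. unfold T1. rewrite nrm2_Ry, nrm2_Rz. apply nrm2_sph. }
  destruct (polar qy (- qz)) as [g [Hg1 Hg2]].
  set (rho := sqrt (qy ^ 2 + (- qz) ^ 2)) in *.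
  set (T2 := fun v => mat_vec (Rz (- (PI / 2))) (mat_vec (Ry g) (mat_vec (Rz (PI / 2)) v))).
  assert (ET2a : T2 ((1, 0), 0) = ((1, 0), 0)).
  { unfold T2. rewrite mv_Rz, mv_Ry, mv_Rz. rewrite cos_neg, sin_neg, cos_PI2, sin_PI2. apply vec3_eq; ring. }
  assert (ET2b : T2 ((qx, qy), qz) = ((qx, rho), 0)).
  { unfold T2. rewrite mv_Rz, mv_Ry, mv_Rz. rewrite cos_neg, sin_neg, cos_PI2, sin_PI2.
    apply vec3_eq. ring.
    - transitivity (cos g * qy - sin g * qz). ring. rewrite Hg1.
      replace qz with (- (- qz)) by ring. rewrite Hg2.
      transitivity (rho * (cos g ^ 2 + sin g ^ 2)). ring. rewrite pyth_cos2. ring.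
    - transitivity (sin g * qy + cos g * qz). ring. rewrite Hg1.
      replace qz with (- (- qz)) by ring. rewrite Hg2. ring. }
  destruct (polar qx rho) as [psi [Hp1 Hp2]].
  assert (Hr : sqrt (qx ^ 2 + rho ^ 2) = 1).
  { replace (rho ^ 2) with (qy ^ 2 + (- qz) ^ 2).
    replace (qx ^ 2 + (qy ^ 2 + (- qz) ^ 2)) with 1 by (rewrite <- Hn; ring). apply sqrt_1.
    unfold rho. rewrite pow2_sqrt. auto. nra. }
  rewrite Hr in Hp1, Hp2.
  assert (V1 : sph (PI / 2) 0 = ((1, 0), 0)).
  { unfold sph. rewrite sin_PI2, cos_PI2, cos_0, sin_0. apply vec3_eq; ring. }
  assert (V2 : sph (PI / 2) psi = ((qx, rho), 0)).
  { unfold sph. rewrite sin_PI2, cos_PI2. apply vec3_eq; lra. }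
  exists psi. intros L A r1 r2.
  transitivity (Gm L A r1 r2 (T1 (sph th1 ph1)) (T1 (sph th2 ph2))).
  { unfold T1. rewrite (Gm_invY L A r1 r2), (Gm_invZ L A r1 r2). reflexivity. }
  rewrite ET1, EQ.
  transitivity (Gm L A r1 r2 (T2 ((1, 0), 0)) (T2 ((qx, qy), qz))).
  { unfold T2. rewrite (Gm_invZ L A r1 r2), (Gm_invY L A r1 r2), (Gm_invZ L A r1 r2). reflexivity. }
  rewrite ET2a, ET2b, V1, V2. reflexivity.
Qed.

Theorem lemma4p1 (L R : nat) (hR : (1 <= R)%nat) (A A' : coeffs) :
  (forall (r1 r2 : nat) (ph1 ph2 : Rdefinitions.R),
      (1 <= r1 <= R)%nat -> (1 <= r2 <= R)%nat ->
      m2proj L A r1 r2 ph1 ph2 = m2proj L A' r1 r2 ph1 ph2)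
  <->
  (forall (r1 r2 : nat) (th1 ph1 th2 ph2 : Rdefinitions.R),
      (1 <= r1 <= R)%nat -> (1 <= r2 <= R)%nat ->
      m2 L A r1 r2 th1 ph1 th2 ph2 = m2 L A' r1 r2 th1 ph1 th2 ph2).
Proof.
  split.
  - intros H r1 r2 th1 ph1 th2 ph2 H1 H2.
    rewrite !m2_Gm. destruct (geom th1 ph1 th2 ph2) as [psi Hpsi].
    rewrite !Hpsi. rewrite <- !m2proj_Gm. apply H; auto.
  - intros H r1 r2 ph1 ph2 H1 H2. rewrite !m2proj_Gm. rewrite <- !m2_Gm. apply H; auto.
Qed.
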